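(* Let $d,n$ be positive integers and let $\mathcal D$ be a Ferrers diagram of order $n$ with $\mathcal D\cap\{d-1,\dots,n\}^2\ne\emptyset$, such that $(\mathcal D,d)$ is in $(a,b)$-standard form. Then for all $i\in\{1,\dots,d-1\}$, $$\nu_i(\mathcal D,d)-\nu_{i-1}(\mathcal D,d)=b-a+d-2i+c_{d-i}(X)-c_i(Y),$$ and consequently, for all $j\in\{1,\dots,d-1\}$, $$\nu_j(\mathcal D,d)-\nu_0(\mathcal D,d)=j(b-a+d-1-j)+\sum_{i=1}^{j}c_{d-i}(X)-\sum_{i=1}^{j}c_i(Y).$$
   Context: A Ferrers diagram is a finite $\mathcal D\subseteq\{1,2,\dots\}^2$ such that $(x,y)\in\mathcal D$ implies $(i,j)\in\mathcal D$ for all $1\le i\le x$, $1\le j\le y$ (first coordinate = row, second = column); order $n$ means $\mathcal D\subseteq\{1,\dots,n\}^2$. For $0\le j\le d-1$, $\nu_j(\mathcal D,d)$ is the number of $(x,y)\in\mathcal D$ with $x\ge d-j$ and $y\ge j+1$ (equivalently $\sum_{i\ge j+1}\max\{0,c_i-d+j\}$ with $c_i$ the column heights). For integers $a,b\ge d-1$, $(\mathcal D,d)$ is in $(a,b)$-standard form if $\mathcal D\cap\{d-1,\dots,n\}^2=\{d-1,\dots,a\}\times\{d-1,\dots,b\}$. In that case, for $i\in\{1,\dots,d-2\}$, $c_i(X)=|\{y>b:(i,y)\in\mathcal D\}|$ and $c_i(Y)=|\{x>a:(x,i)\in\mathcal D\}|$, and by convention $c_{d-1}(X)=c_{d-1}(Y)=0$.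 *)

(* Defs.v *)
From HB Require Import structures.
From mathcomp Require Import all_boot all_order all_algebra.
From mathcomp Require Import finmap.
Set Implicit Arguments. Unset Strict Implicit. Unset Printing Implicit Defensive.
Local Open Scope fset_scope.

Definition ferrers (D : {fset (nat * nat)}) : Prop :=
  (forall p, p \in D -> 1 <= p.1 /\ 1 <= p.2)%N /\
  (forall x y i j, (x, y) \in D -> (1 <= i <= x)%N -> (1 <= j <= y)%N ->
     (i, j) \in D).

Definition of_order (D : {fset (nat * nat)}) (n : nat) : Prop :=
  forall p, p \in D -> (1 <= p.1 <= n)%N /\ (1 <= p.2 <= n)%N.

Definition nu (D : {fset (nat * nat)}) (d j : nat) : nat :=
  #|` [fset p in D | (d - j <= p.1)%N && (j.+1 <= p.2)%N] |.

Definition standard_form (D : {fset (nat * nat)}) (n d a b : nat) : Prop :=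
  (d.-1 <= a)%N /\ (d.-1 <= b)%N /\
  forall x y,
    [&& (x, y) \in D, (d.-1 <= x <= n)%N & (d.-1 <= y <= n)%N] =
    ((d.-1 <= x <= a)%N && (d.-1 <= y <= b)%N).

Definition cX (D : {fset (nat * nat)}) (d b i : nat) : nat :=
  if i == d.-1 then 0%N
  else #|` [fset p in D | (p.1 == i) && (b < p.2)%N] |.

Definition cY (D : {fset (nat * nat)}) (d a i : nat) : nat :=
  if i == d.-1 then 0%N
  else #|` [fset p in D | (p.2 == i) && (a < p.1)%N] |.

(* Main.v *)
Require Import Defs.
From HB Require Import structures.
From mathcomp Require Import all_boot all_order all_algebra.
From mathcomp Require Import finmap zify ring.
Import GRing.Theory Num.Theory.

Lemma card_grid (D : {fset (nat * nat)}) n (P : nat -> nat -> bool) :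
  of_order D n ->
  #|` [fset p in D | P p.1 p.2]%fset| =
  \sum_(0 <= x < n.+1) \sum_(0 <= y < n.+1) ((x, y) \in D) && P x y.
Proof.
move=> hO.
set A := [fset p in D | P p.1 p.2]%fset.
set g := [seq (x, y) | x <- index_iota 0 n.+1, y <- index_iota 0 n.+1].
have guniq : uniq g by apply: allpairs_uniq => //; [exact: iota_uniq|exact: iota_uniq|by move=> [??] [??]].
have pe : perm_eq (filter (mem A) g) (enum_fset A).
  apply: uniq_perm; [exact: filter_uniq | exact: fset_uniq |].
  move=> [x y]; rewrite mem_filter /=.
  case hA: ((x, y) \in A) => //=.
  have : (x,y) \in D by move: hA; rewrite !inE => /andP[].
  move=> /hO /= [/andP[_ hx] /andP[_ hy]].
  have := @allpairs_f _ _ _ (fun a b : nat => (a,b)) (index_iota 0 n.+1) (index_iota 0 n.+1) x y; rewrite !mem_index_iota => -> //; lia.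
rewrite card_fset_sum1 -(perm_big _ pe) big_filter big_mkcond big_allpairs /=.
apply: eq_bigr => x _; apply: eq_bigr => y _.
by rewrite !inE /=; case: ((x,y) \in D); case: (P x y).
Qed.

Lemma delta (m r : nat) (B : nat -> bool) : \sum_(0 <= x < m) ((x == r) && B x) = (r < m) && B r.
Proof. elim: m => [|m IH]; first by rewrite big_geq. rewrite big_nat_recr //= IH.
case: (ltngtP m r) => h.
- have -> : (r < m.+1) = false by lia. done.
- have -> : (r < m.+1) = true by lia. by rewrite /= addn0.
- subst; rewrite ltnSn /=. by case: (B r). Qed.

Lemma cnt i b m : \sum_(0 <= y < m) ((i < y) && (y <= b)) = minn m b.+1 - minn m i.+1.
Proof. elim: m => [|m IH]; first by rewrite big_geq. rewrite big_nat_recr //= IH; lia. Qed.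

Definition S (D : {fset (nat * nat)}) n (P : nat -> nat -> bool) :=
  \sum_(0 <= x < n.+1) \sum_(0 <= y < n.+1) (((x, y) \in D) && P x y).

Lemma nuS D n d j : of_order D n -> nu D d j = S D n (fun x y => (d - j <= x) && (j < y)).
Proof. move=> hO; exact: card_grid. Qed.

Lemma sf_facts {D n d a b} : (0 < d) -> ferrers D -> standard_form D n d a b ->
  [/\ (d.-1, b) \in D, (a, d.-1) \in D, a <= n & b <= n].
Proof.
move=> hd _ [ha [hb sf]].
have /and3P[h1 _ /andP[_ h1']] : [&& (d.-1, b) \in D, (d.-1 <= d.-1 <= n) & (d.-1 <= b <= n)]
  by rewrite sf leqnn ha hb leqnn.
have /and3P[h2 /andP[_ h2'] _] : [&& (a, d.-1) \in D, (d.-1 <= a <= n) & (d.-1 <= d.-1 <= n)]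
  by rewrite sf leqnn ha hb leqnn.
by [].
Qed.

Lemma cXS D n d a b r : 0 < d -> ferrers D -> of_order D n -> standard_form D n d a b ->
  cX D d b r = S D n (fun x y => (x == r) && (b < y)).
Proof.
move=> hd hF hO hS; rewrite /cX.
case: eqP => [->|_]; last exact: card_grid.
rewrite /S big1 // => x _; rewrite big1 // => y _.
case hD: ((x,y) \in D) => //=.
case: eqP => //= hx0.
have [_ [_ sf]] := hS.
have [/andP[_ hx] /andP[_ hy]] := hO _ hD.
case: ltnP => //= hby.
have [_ [hb _]] := hS.
have := sf x y; rewrite hD hx hy hx0 leqnn /=.
have -> : d.-1 <= y by lia.
move=> /esym/andP[_ /andP[_ h]]; lia.
Qed.


Lemma cYS D n d a b c : 0 < d -> ferrers D -> of_order D n -> standard_form D n d a b ->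
  cY D d a c = S D n (fun x y => (y == c) && (a < x)).
Proof.
move=> hd hF hO hS; rewrite /cY.
case: eqP => [->|_]; last exact: card_grid.
rewrite /S big1 // => x _; rewrite big1 // => y _.
case hD: ((x,y) \in D) => //=.
case: eqP => //= hy0.
have [_ [_ sf]] := hS.
have [/andP[_ hx] /andP[_ hy]] := hO _ hD.
case: ltnP => //= hax.
have [ha [_ _]] := hS.
have := sf x y; rewrite hD hx hy hy0 leqnn /=.
have -> : d.-1 <= x by lia.
move=> /esym/andP[/andP[_ h] _]; lia.
Qed.

Lemma rowS D n d a b r i : 0 < d -> ferrers D -> of_order D n -> standard_form D n d a b ->
  1 <= r <= d.-1 -> i <= b ->
  S D n (fun x y => (x == r) && (i < y)) = b - i + S D n (fun x y => (x == r) && (b < y)).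
Proof.
move=> hd hF hO hS hr hi.
have [hdb hda han hbn] := sf_facts (n:=n) hd hF hS.
have -> : S D n (fun x y => (x == r) && (i < y)) =
   \sum_(0 <= x < n.+1) \sum_(0 <= y < n.+1) ((x == r) && ((i < y) && (y <= b)))
   + S D n (fun x y => (x == r) && (b < y)).
  rewrite /S -big_split; apply: eq_bigr => x _; rewrite -big_split; apply: eq_bigr => y _ /=.
  case: eqP => /= [->|]; last by rewrite !andbF.
  case: (ltnP b y) => hby.
    by rewrite andbF (leq_ltn_trans hi hby) !andbT.
  rewrite !andbF !andbT addn0.
  case: (ltnP i y) => hiy; rewrite ?andbT ?andbF //.
  have [_ hcl] := hF.
  by rewrite (hcl _ _ r y hdb) //; apply/andP; split; lia.
rewrite exchange_big /=.
under eq_bigr => y _ do rewrite delta.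
have [_ [hb' _]] := hS. have -> : r < n.+1 by lia.
by rewrite cnt; congr (_ + _); lia.
Qed.

Lemma colS D n d a b c k : 0 < d -> ferrers D -> of_order D n -> standard_form D n d a b ->
  1 <= c <= d.-1 -> k <= a ->
  S D n (fun x y => (k < x) && (y == c)) = a - k + S D n (fun x y => (y == c) && (a < x)).
Proof.
move=> hd hF hO hS hc hk.
have [hdb hda han hbn] := sf_facts (n:=n) hd hF hS.
have -> : S D n (fun x y => (k < x) && (y == c)) =
   \sum_(0 <= x < n.+1) \sum_(0 <= y < n.+1) ((y == c) && ((k < x) && (x <= a)))
   + S D n (fun x y => (y == c) && (a < x)).
  rewrite /S -big_split; apply: eq_bigr => x _; rewrite -big_split; apply: eq_bigr => y _ /=.
  case: eqP => /= [->|]; last by rewrite !andbF.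
  case: (ltnP a x) => hax.
    by rewrite andbF (leq_ltn_trans hk hax) !andbT.
  rewrite !andbF !andbT addn0.
  case: (ltnP k x) => hkx; rewrite ?andbT ?andbF //.
  have [_ hcl] := hF.
  by rewrite (hcl _ _ x c hda) //; apply/andP; split; lia.
under eq_bigr => x _ do rewrite delta.
have [_ [hb' _]] := hS. have -> : c < n.+1 by lia.
by rewrite cnt; congr (_ + _); lia.
Qed.

Lemma part1 D n d a b i : 0 < d -> ferrers D -> of_order D n -> standard_form D n d a b ->
  1 <= i <= d.-1 ->
  nu D d i + (a - (d - i) + cY D d a i) = nu D d i.-1 + (b - i + cX D d b (d - i)).
Proof.
move=> hd hF hO hS hi.
have [ha [hb _]] := hS.
rewrite (cXS D n d a b (d - i) hd hF hO hS) (cYS D n d a b i hd hF hO hS) -(rowS D n d a b (d - i) i hd hF hO hS); try lia.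
rewrite -(colS D n d a b i (d - i) hd hF hO hS); try lia.
rewrite !(nuS D n d _ hO) /S -!big_split; apply: eq_bigr => x _; rewrite -!big_split; apply: eq_bigr => y _ /=.
case: ((x, y) \in D) => /=; lia.
Qed.

Local Open Scope ring_scope.

Theorem proposition4p11 (d n : nat) (D : {fset (nat * nat)}) (a b : nat) :
  (0 < d)%N -> (0 < n)%N ->
  ferrers D -> of_order D n ->
  (exists2 p, p \in D & (d.-1 <= p.1 <= n)%N && (d.-1 <= p.2 <= n)%N) ->
  standard_form D n d a b ->
  (forall i : nat, (1 <= i <= d.-1)%N ->
     (nu D d i)%:Z - (nu D d i.-1)%:Z
       = b%:Z - a%:Z + d%:Z - 2 * i%:Z + (cX D d b (d - i))%:Z - (cY D d a i)%:Z)
  /\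
  (forall j : nat, (1 <= j <= d.-1)%N ->
     (nu D d j)%:Z - (nu D d 0)%:Z
       = j%:Z * (b%:Z - a%:Z + d%:Z - 1 - j%:Z)
         + \sum_(1 <= i < j.+1) (cX D d b (d - i))%:Z
         - \sum_(1 <= i < j.+1) (cY D d a i)%:Z).
Proof.
move=> hd hn hF hO _ hS.
have [ha [hb _]] := hS.
have P1 : forall i : nat, (1 <= i <= d.-1)%N ->
     (nu D d i)%:Z - (nu D d i.-1)%:Z
       = b%:Z - a%:Z + d%:Z - 2 * i%:Z + (cX D d b (d - i))%:Z - (cY D d a i)%:Z.
  move=> i hi; have := part1 D n d a b i hd hF hO hS hi; lia.
split => //.
suff H : forall j : nat, (j <= d.-1)%N ->
     (nu D d j)%:Z - (nu D d 0)%:Z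
       = j%:Z * (b%:Z - a%:Z + d%:Z - 1 - j%:Z)
         + \sum_(1 <= i < j.+1) (cX D d b (d - i))%:Z
         - \sum_(1 <= i < j.+1) (cY D d a i)%:Z.
  by move=> j /andP[_ hj]; apply: H.
elim=> [_|j IH hj]; first by rewrite !big_geq //; lia.
rewrite [X in _ = _ + X - _]big_nat_recr //= [X in _ = _ - X]big_nat_recr //=.
have := IH (ltnW hj); have := P1 j.+1; rewrite /= hj => /(_ isT) h1 h2.
have -> : (nu D d j.+1)%:Z - (nu D d 0)%:Z = ((nu D d j.+1)%:Z - (nu D d j)%:Z) + ((nu D d j)%:Z - (nu D d 0)%:Z)
  by rewrite addrA subrK.
rewrite h1 h2 intS.
ring.
Qed.
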